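(* Let $k(x)$ be a polynomial with $k(x)=k(-x)=\overline{k(x)}$ for real $x$ (i.e. an even polynomial with real coefficients). For $\xi>0$ let $S_\xi$ be the operator on $L^2(0,\xi)$ given by $(S_\xi f)(x)=f(x)+\int_0^\xi f(t)k(x-t)\,dt$, and for those $\xi>0$ at which $S_\xi$ is invertible put $h_2(\xi)=(S_\xi^{-1}1)(\xi)$, where $S_\xi^{-1}1$ (a polynomial in $x$) is evaluated at $x=\xi$; equivalently $h_2(\xi)=1+\int_0^\xi\Gamma_\xi(\xi,t)\,dt$, where $\Gamma_\xi$ is the resolvent kernel, $S_\xi^{-1}f=f+\int_0^\xi\Gamma_\xi(x,t)f(t)\,dt$. Then there is a rational function $R$ with $h_2(\xi)=R(\xi)$ for all such $\xi$. Consequently the function $Q(\xi)=\frac{1}{2h_2(\xi)^2}$ is rational. *)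

(* Defs.v *)
From HB Require Import structures.
From mathcomp Require Import all_boot all_order all_algebra.
From mathcomp Require Import all_classical all_reals all_analysis.
Set Implicit Arguments. Unset Strict Implicit. Unset Printing Implicit Defensive.
Import Order.TTheory GRing.Theory Num.Theory.
Local Open Scope classical_set_scope.
Local Open Scope ring_scope.

Section Defs.
Variable R : realType.
Local Notation mu := (@lebesgue_measure R).

Definition I0 (xi : R) : set R := `[0, xi].

Definition L2on (xi : R) (f : R -> R) : Prop :=
  measurable_fun (I0 xi) f /\
  (\int[mu]_(x in I0 xi) ((f x) ^+ 2)%:E < +oo)%E.

Definition ae_eq_on (xi : R) (f g : R -> R) : Prop :=
  {ae mu, forall x, I0 xi x -> f x = g x}.

Definition Sop (k : {poly R}) (xi : R) (f : R -> R) (x : R) : R :=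
  f x + Rintegral mu (I0 xi) (fun t => f t * k.[x - t]).

(* S_xi is invertible on L^2(0, xi): bijective on equivalence classes *)
Definition S_invertible (k : {poly R}) (xi : R) : Prop :=
  (forall f, L2on xi f -> exists g, L2on xi g /\ ae_eq_on xi (Sop k xi g) f) /\
  (forall g1 g2, L2on xi g1 -> L2on xi g2 ->
     ae_eq_on xi (Sop k xi g1) (Sop k xi g2) -> ae_eq_on xi g1 g2).

(* If g = S_xi^{-1} 1 in L^2, then its (polynomial, continuous)
   representative is x |-> 1 - \int_0^xi g(t) k(x - t) dt; h2 is its
   value at x = xi. *)
Definition h2_of (k : {poly R}) (xi : R) (g : R -> R) : R :=
  1 - Rintegral mu (I0 xi) (fun t => g t * k.[xi - t]).

End Defs.

(* Main.v *)
Require Import Defs.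
From HB Require Import structures.
From mathcomp Require Import all_boot all_order all_algebra.
From mathcomp Require Import all_classical all_reals all_analysis.
From mathcomp Require Import measurable_realfun.
From mathcomp.algebra_tactics Require Import ring lra.
Import Order.TTheory GRing.Theory Num.Theory.
Import numFieldNormedType.Exports.
Local Open Scope ring_scope.
Local Open Scope classical_set_scope.

Section Aux.
Variable R : realType.
Local Notation mu := (@lebesgue_measure R).

Definition Int (q : {poly R}) : {poly R} :=
  \poly_(i < (size q).+1) (if i is j.+1 then q`_j / j.+1%:R else 0).

Lemma coef_Int q i : (Int q)`_i = if i is j.+1 then q`_j / j.+1%:R else 0.
Proof.
rewrite coef_poly; case: i => [|j]; first by [].
idtac.
rewrite ltnS; case: ltnP => // hj.
by rewrite nth_default ?mul0r.
Qed.

Lemma deriv_Int q : deriv (Int q) = q.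
Proof.
apply/polyP => i; rewrite coef_deriv coef_Int -[_ *+ i.+1]mulr_natr divfK // pnatr_eq0.
Qed.

Lemma IntD p q : Int (p + q) = Int p + Int q.
Proof.
by apply/polyP => i; rewrite coefD !coef_Int; case: i => [|j]; rewrite ?addr0 // coefD mulrDl.
Qed.

Lemma IntZ c p : Int (c *: p) = c *: Int p.
Proof.
by apply/polyP => i; rewrite coefZ !coef_Int; case: i => [|j]; rewrite ?mulr0 // coefZ mulrA.
Qed.

Lemma Int0 : Int 0 = 0.
Proof. by apply/polyP => i; rewrite coef_Int coef0; case: i => // j; rewrite coef0 mul0r. Qed.

Lemma Int_sum (I : Type) (r : seq I) (F : I -> {poly R}) :
  Int (\sum_(j <- r) F j) = \sum_(j <- r) Int (F j).
Proof.
elim: r => [|a r IH]; first by rewrite !big_nil Int0.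
by rewrite !big_cons IntD IH.
Qed.

Lemma Int_horner0 q : (Int q).[0] = 0.
Proof. by rewrite horner_coef0 coef_Int. Qed.

Lemma poly_integrable xi (q : {poly R}) :
  mu.-integrable (I0 xi) (EFin \o horner q).
Proof.
apply: continuous_compact_integrable; first exact: segment_compact.
by apply: continuous_subspaceT => x; exact: continuous_horner.
Qed.

Lemma Rintegral_poly xi (q : {poly R}) : 0 < xi ->
  Rintegral mu (I0 xi) (horner q) = (Int q).[xi].
Proof.
move=> xi0; rewrite /Rintegral /I0.
rewrite (@continuous_FTC2 _ (horner q) (horner (Int q)) 0 xi xi0).
- by rewrite /= Int_horner0 subr0.
- by apply: continuous_subspaceT => x; exact: continuous_horner.
- split.
  + by move=> x _; exact: derivable_horner.
  + by apply: cvg_at_right_filter; exact: continuous_horner.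
  + by apply: cvg_at_left_filter; exact: continuous_horner.
- by move=> x _; rewrite -derivE deriv_Int.
Qed.

Lemma mI0 xi : @measurable _ (measurableTypeR R) (I0 xi).
Proof. exact: measurable_itv. Qed.

Lemma Rintegral_sum xi (I : Type) (r : seq I) (F : I -> R -> R) :
  (forall i, mu.-integrable (I0 xi) (EFin \o F i)) ->
  mu.-integrable (I0 xi) (EFin \o (fun t => \sum_(i <- r) F i t)) /\
  Rintegral mu (I0 xi) (fun t => \sum_(i <- r) F i t) =
    \sum_(i <- r) Rintegral mu (I0 xi) (F i).
Proof.
move=> hF; elim: r => [|a r [IHi IHe]].
  have -> : (fun t => \sum_(i <- [::]) F i t) = (fun=> 0).
    by apply: funext => t; rewrite big_nil.
  rewrite big_nil; split; first by apply: integrable0; exact: mI0.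
  by rewrite Rintegral_cst ?mul0r //; exact: mI0.
have -> : (fun t => \sum_(i <- a :: r) F i t) =
    (fun t => F a t + \sum_(i <- r) F i t).
  by apply: funext => t; rewrite big_cons.
rewrite big_cons; split.
  apply: (eq_integrable (mI0 xi) _ _ _ (integrableD (mI0 xi) (hF a) IHi)) => x _.
  by rewrite /= EFinD.
by rewrite RintegralD ?IHe //; exact: mI0.
Qed.

Lemma poly_bounded xi (q : {poly R}) : [bounded q.[x] | x in I0 xi].
Proof.
have cq : {within I0 xi, continuous (horner q)}.
  by apply: continuous_subspaceT => x; exact: continuous_horner.
have /compact_bounded[M [_ mrt]] := continuous_compact cq (@segment_compact _ 0 xi).
by exists M; split; rewrite ?num_real // => ? ? ? ?; exact: mrt.
Qed.

Lemma poly_measurable xi (q : {poly R}) : measurable_fun (I0 xi) (horner q).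
Proof.
apply: subspace_continuous_measurable_fun; first exact: mI0.
by apply: continuous_subspaceT => x; exact: continuous_horner.
Qed.

Lemma abs_le_1sq (y : R) : `|y| <= 1 + y ^+ 2.
Proof.
have h1 : 0 <= (`|y| - 1) ^+ 2 by exact: sqr_ge0.
have h2 : y ^+ 2 = `|y| ^+ 2 by rewrite real_normK // num_real.
have h3 := normr_ge0 y.
rewrite h2; nra.
Qed.

Lemma L2_integrable xi g (q : {poly R}) : L2on xi g ->
  mu.-integrable (I0 xi) (EFin \o (fun t => g t * q.[t])).
Proof.
case=> mg hg.
have ig : mu.-integrable (I0 xi) (EFin \o g).
  have i2 : mu.-integrable (I0 xi) (EFin \o (fun t => g t ^+ 2)).
    apply/integrableP; split.
      by apply/measurable_EFinP; apply: measurable_funM.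
    apply: le_lt_trans hg; rewrite le_eqVlt; apply/orP; left; apply/eqP.
    by apply: eq_integral => x _ /=; rewrite ger0_norm // sqr_ge0.
  have i1 : mu.-integrable (I0 xi) (EFin \o (fun t => 1 + g t ^+ 2)).
    have ic : mu.-integrable (I0 xi) (EFin \o (fun _ : R => 1 : R)).
      apply: measurable_bounded_integrable; first exact: mI0.
      - exact: compact_finite_measure (@segment_compact _ 0 xi).
      - exact: measurable_cst.
      - by exists 1; split; rewrite ?num_real // => ? ? ? ?; rewrite normr1 ltW.
    apply: (eq_integrable (mI0 xi) _ _ _ (integrableD (mI0 xi) ic i2)) => x _.
    by rewrite /= EFinD.
  apply: (le_integrable (mI0 xi) _ _ i1); first exact/measurable_EFinP.
  move=> x _ /=. rewrite lee_fin (ger0_norm (addr_ge0 ler01 (sqr_ge0 _))).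
  exact: abs_le_1sq.
apply: (eq_integrable (mI0 xi) _ _ _ (integrableMr (mI0 xi) (poly_measurable xi q) (poly_bounded xi q) ig)).
by move=> x _ /=; rewrite mulrC.
Qed.
Lemma roots_seq (p : {poly R}) : p != 0 ->
  exists s : seq R, forall x, root p x -> x \in s.
Proof.
have [n] := ubnP (size p); elim: n p => // n IH p hs p0.
case: (pselect (exists a, root p a)) => [[a /factor_theorem [q hq]]|nr]; last first.
  by exists [::] => x rx; exfalso; apply: nr; exists x.
have q0 : q != 0 by apply: contraNneq p0 => q0; rewrite hq q0 mul0r.
have hsz : size p = (size q).+1.
  by rewrite hq size_Mmonic ?monicXsubC // size_XsubC addn2.
have hq' : (size q < n)%N by rewrite -ltnS -hsz.
have [s hs'] := IH q hq' q0.
exists (a :: s) => x; rewrite hq rootM root_XsubC in_cons => /orP[/hs' ->|->]; by rewrite ?orbT.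
Qed.

Lemma poly_not_ae0 xi (p : {poly R}) : 0 < xi -> p != 0 ->
  ~ ae_eq_on xi (horner p) (fun _ => 0).
Proof.
move=> xi0 p0 [N [mN N0 sub]].
have [s hs] := roots_seq _ p0.
have cs : countable [set` s] by apply: finite_set_countable; exact: finite_seq.
have ms : measurable ([set` s] : set (measurableTypeR R)).
  by apply: countable_measurable => // t; exact: measurable_set1.
have IN : I0 xi `<=` N `|` [set` s].
  move=> x Ix; case: (pselect (p.[x] = 0)) => hx.
    by right; apply: hs; apply/rootP.
  by left; apply: sub => /= h; apply: hx; exact: h.
have : (mu (I0 xi) <= mu N + mu [set` s])%E.
  apply: le_trans (measureU2 _ _ _); [|exact: mN|exact: ms].
  apply: le_measure => //; rewrite inE //; [exact: mI0|exact: measurableU].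
rewrite N0 (countable_lebesgue_measure0 cs) adde0 /I0 lebesgue_measure_itv /=.
by rewrite lte_fin xi0 oppr0 adde0 lee_fin leNgt xi0.
Qed.

Definition ap (k : {poly R}) (i : nat) : {poly R} := (k^`N(i)) \Po (- 'X).

Lemma k_expand (k : {poly R}) x t :
  k.[x - t] = \sum_(i < size k) (ap k i).[t] * x ^+ i.
Proof.
rewrite addrC nderiv_taylor; last exact: mulrC.
apply: eq_bigr => i _.
by rewrite /ap horner_comp hornerN hornerX.
Qed.

Definition Good xi (f : R -> R) :=
  forall q : {poly R}, mu.-integrable (I0 xi) (EFin \o (fun t => f t * q.[t])).

Lemma Sint_expand xi (k : {poly R}) f : Good xi f -> forall x,
  Rintegral mu (I0 xi) (fun t => f t * k.[x - t]) =
  \sum_(i < size k) x ^+ i * Rintegral mu (I0 xi) (fun t => f t * (ap k i).[t]).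
Proof.
move=> hf x.
transitivity (Rintegral mu (I0 xi) (fun t => \sum_(i < size k)
    (fun i t => x ^+ i * (f t * (ap k i).[t])) i t)).
  apply: eq_Rintegral => t _; rewrite k_expand mulr_sumr; apply: eq_bigr => i _.
  by rewrite /=; ring.
have hint : forall i : 'I_(size k), mu.-integrable (I0 xi)
    (EFin \o (fun i t => x ^+ i * (f t * (ap k i).[t])) i).
  move=> i; apply: (eq_integrable (mI0 xi) _ _ _ (integrableZl (mI0 xi) (x ^+ i) (hf (ap k i)))).
  by move=> t _ /=; rewrite EFinM.
rewrite (@Rintegral_sum xi _ _ _ hint).2.
apply: eq_bigr => i _; apply: RintegralZl; [exact: mI0|exact: hf].
Qed.

End Aux.
Arguments Int {R}. Arguments ap {R}. Arguments Good {R}. Arguments mI0 {R}.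
Arguments poly_integrable {R}. Arguments Rintegral_poly {R}. Arguments poly_measurable {R}.
Arguments L2_integrable {R}. Arguments Sint_expand {R}. Arguments poly_not_ae0 {R}.
Arguments Int_sum {R}. Arguments IntD {R}. Arguments IntZ {R}. Arguments Int0 {R}.

Section Main.
Variable R : realType.
Local Notation mu := (@lebesgue_measure R).
Variable k : {poly R}.
Local Notation n := (size k).

Definition Mp : 'M[{poly R}]_n :=
  \matrix_(j, i) ((j == i)%:R + Int ('X^j * ap k i)).
Definition bp : 'rV[{poly R}]_n := \row_i Int (ap k i).
Definition Dp : {poly R} := \det Mp.
Definition Np : {poly R} := Dp - \sum_(i < n) 'X^i * (bp *m \adj Mp) 0 i.
Definition Am (xi : R) := map_mx (horner_eval xi) Mp.

Lemma AmE (xi : R) j i : Am xi j i = (j == i)%:R + (Int ('X^j * ap k i)).[xi].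
Proof. by rewrite /Am mxE /horner_eval mxE hornerD hornerMn hornerC. Qed.

Lemma Good_poly (xi : R) (p : {poly R}) : Good xi (horner p).
Proof.
move=> q; apply: (eq_integrable (mI0 xi) _ _ _ (poly_integrable xi (p * q))).
by move=> t _ /=; rewrite hornerM.
Qed.

Lemma Good_L2 (xi : R) (g : R -> R) : L2on xi g -> Good xi g.
Proof. by move=> hg q; exact: L2_integrable. Qed.

Lemma c_poly (xi : R) (p : {poly R}) i : 0 < xi ->
  Rintegral mu (I0 xi) (fun t => p.[t] * (ap k i).[t]) = (Int (p * ap k i)).[xi].
Proof.
move=> xi0; rewrite -Rintegral_poly //; apply: eq_Rintegral => t _.
exact: (esym (hornerM _ _ _)).
Qed.

Lemma c_lin (xi : R) (c : 'rV[R]_n) (i : 'I_n) :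
  (Int ((\sum_(j < n) c 0 j *: 'X^j) * ap k i)).[xi] = (c *m Am xi) 0 i - c 0 i.
Proof.
rewrite mulr_suml Int_sum horner_sum mxE.
rewrite (eq_bigr (fun j => c 0 j * Am xi j i - c 0 j * (j == i)%:R)); last first.
  by move=> j _; rewrite AmE -scalerAl IntZ hornerZ; ring.
rewrite sumrB [X in _ - X](bigD1 i) //= eqxx mulr1.
rewrite [X in _ - (_ + X)]big1 ?addr0 //.
by move=> j /negbTE ->; rewrite mulr0.
Qed.

Lemma IntN (p : {poly R}) : Int (- p) = - Int p.
Proof. by rewrite -scaleN1r IntZ scaleN1r. Qed.

Lemma L2on_poly (xi : R) (p : {poly R}) : L2on xi (horner p).
Proof.
split; first exact: poly_measurable.
rewrite (_ : (fun x => (p.[x] ^+ 2)%:E) = EFin \o horner (p ^+ 2)).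
  exact: (integrable_lty (mI0 xi) (poly_integrable _ _)).
by apply: funext => x /=; rewrite horner_exp.
Qed.

Lemma Sop0 (xi x : R) : Sop k xi (fun _ => 0) x = 0.
Proof.
rewrite /Sop; under eq_Rintegral do rewrite mul0r.
by rewrite Rintegral_cst ?mul0r ?add0r //; exact: mI0.
Qed.

Lemma aeS (P Q : R -> Prop) : (forall x, P x -> Q x) ->
  {ae mu, forall x, P x} -> {ae mu, forall x, Q x}.
Proof.
move=> PQ [N [mN N0 sub]]; exists N; split => // x /= nQ; apply: sub => /= hP.
by apply: nQ; exact: PQ.
Qed.

Lemma part1 (xi : R) : 0 < xi -> S_invertible k xi ->
  forall g : R -> R, L2on xi g -> ae_eq_on xi (Sop k xi g) (fun _ => 1) ->
  Dp.[xi] != 0 /\ h2_of k xi g = Np.[xi] / Dp.[xi].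
Proof.
move=> xi0 [_ Sinj] g L2g hS.
have detE : \det (Am xi) = Dp.[xi] by rewrite /Am det_map_mx.
have D0 : Dp.[xi] != 0.
  rewrite -detE; apply/negP => /det0P [v v0 vA].
  pose ph : {poly R} := \sum_(j < n) v 0 j *: 'X^j.
  have ph0 : ph != 0.
    apply: contra v0 => /eqP ph0; apply/eqP/rowP => j; rewrite mxE.
    have := congr1 (fun p : {poly R} => p`_j) ph0; rewrite coef0 coef_sum => <-.
    rewrite (bigD1 j) //= coefZ coefXn eqxx mulr1 big1 ?addr0 //.
    move=> l hl; rewrite coefZ coefXn.
    have -> : (nat_of_ord j == nat_of_ord l) = false.
      by apply/negbTE; rewrite eq_sym.
    by rewrite mulr0.
  have hSph : forall x, Sop k xi (horner ph) x = 0.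
    move=> x; rewrite /Sop (Sint_expand _ k _ (Good_poly xi ph)).
    rewrite (eq_bigr (fun i : 'I_n => - (x ^+ i * v 0 i))); last first.
      by move=> i _; rewrite c_poly // /ph c_lin vA mxE sub0r mulrN.
    rewrite sumrN /ph horner_sum.
    rewrite (eq_bigr (fun i : 'I_n => x ^+ i * v 0 i)); first exact: subrr.
    by move=> i _; rewrite hornerZ hornerXn mulrC.
  have L20 : L2on xi (fun _ => 0).
    have -> : (fun _ : R => 0 : R) = horner 0.
      by apply: funext => x; rewrite horner0.
    exact: L2on_poly.
  have := Sinj (horner ph) (fun _ => 0) (L2on_poly xi ph) L20.
  have hae : ae_eq_on xi (Sop k xi (horner ph)) (Sop k xi (fun _ => 0)).
    by apply: aeW => x _; rewrite hSph Sop0.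
  move=> /(_ hae); exact: poly_not_ae0.
pose m : 'rV[R]_n := \row_i Rintegral mu (I0 xi) (fun t => g t * (ap k i).[t]).
have Gg := Good_L2 xi g L2g.
pose Pp : {poly R} := 1 - \sum_(j < n) m 0 j *: 'X^j.
have gP : ae_eq_on xi g (horner Pp).
  move: hS; apply: aeS => x hx Ix.
  have := hx Ix; rewrite /Sop (Sint_expand _ k _ Gg) => h.
  rewrite /Pp hornerD hornerN hornerC horner_sum -h.
  have -> : \sum_(i < n) (m 0 i *: 'X^i).[x] =
      \sum_(i < n) x ^+ i * Rintegral mu (I0 xi) (fun t => g t * (ap k i).[t]).
    by apply: eq_bigr => i _; rewrite hornerZ hornerXn mxE mulrC.
  by rewrite addrK.
have mA : m *m Am xi = map_mx (horner_eval xi) bp.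
  apply/rowP => i.
  have e2 : (map_mx (horner_eval xi) bp) 0 i = (Int (ap k i)).[xi].
    by rewrite !mxE.
  rewrite e2.
  have e1 : m 0 i = (Int (Pp * ap k i)).[xi].
    rewrite mxE -c_poly // /Rintegral; congr fine.
    refine (ae_eq_integral _ _ (mI0 xi) _ _ _).
    - exact: (measurable_int mu (Gg (ap k i))).
    - apply: (eq_measurable_fun (EFin \o horner (Pp * ap k i))).
        by move=> t _ /=; rewrite hornerM.
      exact: (measurable_int mu (poly_integrable xi (Pp * ap k i))).
    - by move: gP; apply: aeS => x hx Ix; rewrite /= hx.
  move: e1; rewrite /Pp mulrBl mul1r IntD IntN hornerD hornerN c_lin.
  move: (m 0 i) ((m *m Am xi) 0 i) ((Int (ap k i)).[xi]) => a b c.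
  lra.
have unitA : Am xi \in unitmx by rewrite unitmxE unitfE detE.
have mE : m = map_mx (horner_eval xi) bp *m invmx (Am xi) by rewrite -mA mulmxK.
rewrite /invmx unitA -scalemxAr in mE.
have sc : forall (a : R) (M : 'rV[R]_n) i, (a *: M) 0 i = a * M 0 i.
  by move=> a M i; rewrite mxE.
have eterm : forall i : 'I_n,
    xi ^+ i * Rintegral mu (I0 xi) (fun t => g t * (ap k i).[t]) =
    ('X^i * (bp *m \adj Mp) 0 i).[xi] / Dp.[xi].
  move=> i.
  have ci : ((bp *m \adj Mp) 0 i).[xi] =
      (map_mx (horner_eval xi) bp *m \adj (Am xi)) 0 i.
    by rewrite /Am -map_mx_adj -map_mxM [RHS]mxE.
  have mi : Rintegral mu (I0 xi) (fun t => g t * (ap k i).[t]) = m 0 i.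
    by rewrite mxE.
  rewrite mi mE sc hornerM hornerXn ci detE.
  by rewrite (mulrC (Dp.[xi])^-1) mulrA.
split => //.
rewrite /h2_of (Sint_expand _ k _ Gg) (eq_bigr _ (fun i _ => eterm i)) -mulr_suml.
have hN : Np.[xi] = Dp.[xi] - \sum_(i < n) ('X^i * (bp *m \adj Mp) 0 i).[xi].
  by rewrite /Np hornerD hornerN [X in _ - X = _]horner_sum.
by rewrite hN mulrBl divff.
Qed.

Lemma part2 (h D N : R) : D != 0 -> h = N / D -> h != 0 ->
  N ^+ 2 *+ 2 != 0 /\ 1 / (2 * h ^+ 2) = D ^+ 2 / (N ^+ 2 *+ 2).
Proof.
move=> D0 hE h0.
have N0 : N != 0 by apply: contra h0 => /eqP N0; rewrite hE N0 mul0r.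
have N2 : N ^+ 2 *+ 2 != 0 by rewrite mulrn_eq0 /= expf_eq0 /= (negbTE N0).
split => //; rewrite hE; field.
by rewrite N0 D0.
Qed.

End Main.
Arguments Np {R}. Arguments Dp {R}.

Local Close Scope classical_set_scope.

Theorem theorem8p1 (R : realType) (k : {poly R})
    (k_even : forall x : R, k.[- x] = k.[x]) :
  (exists p q : {poly R},
     forall (xi : R), 0 < xi -> S_invertible k xi ->
     forall g : R -> R, L2on xi g -> ae_eq_on xi (Sop k xi g) (fun _ => 1) ->
       q.[xi] != 0 /\ h2_of k xi g = p.[xi] / q.[xi])
  /\
  (exists p q : {poly R},
     forall (xi : R), 0 < xi -> S_invertible k xi ->
     forall g : R -> R, L2on xi g -> ae_eq_on xi (Sop k xi g) (fun _ => 1) ->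
       h2_of k xi g != 0 ->
       q.[xi] != 0 /\ 1 / (2 * (h2_of k xi g) ^+ 2) = p.[xi] / q.[xi]).
Proof.
split.
  exists (Np k), (Dp k) => xi xi0 Si g L2g hS.
  exact: (@part1 R k xi xi0 Si g L2g hS).
exists (Dp k ^+ 2), (Np k ^+ 2 *+ 2) => xi xi0 Si g L2g hS h0.
have [D0 hE] := @part1 R k xi xi0 Si g L2g hS.
rewrite hornerMn !horner_exp.
exact: (@part2 R _ _ _ D0 hE h0).
Qed.
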